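(* Let $n\ge1$ be an integer with binary expansion $n=\sum_{k=0}^{K}2^{L_k}$, $L_0>L_1>\dots>L_K\ge0$. Define the probability distribution on $\{L_0,\dots,L_K\}$ by $\Pr(L=L_k)=2^{L_k}/n$. Then its Shannon entropy satisfies $H(L)\le 2$ bits.
   Context: Entropy is measured in bits ($\log_2$). *)

(* Defs.v *)
From Stdlib Require Import Reals Lra Lia List Arith.
Open Scope R_scope.

Definition log2R (x : R) : R := ln x / ln 2.

Definition entropy_bits (ps : list R) : R :=
  fold_right (fun p acc => - (p * log2R p) + acc) 0 ps.

Definition bin_exps (n : nat) : list nat :=
  filter (fun k => Nat.testbit n k) (seq 0 (S (Nat.log2 n))).

Definition binProb (n k : nat) : R := 2 ^ k / INR n.

(* Main.v *)
Require Import Defs.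
From Stdlib Require Import Reals List Arith Lra Lia.
Open Scope R_scope.
Import ListNotations.

Fixpoint Sl (l : list nat) : R := match l with [] => 0 | k :: t => 2 ^ k + Sl t end.
Fixpoint Wl (l : list nat) : R := match l with [] => 0 | k :: t => 2 ^ k * INR k + Wl t end.

Lemma Sl_map l : Sl (map S l) = 2 * Sl l.
Proof. induction l; simpl; [lra|]. rewrite IHl. simpl. lra. Qed.
Lemma Wl_map l : Wl (map S l) = 2 * Wl l + 2 * Sl l.
Proof. induction l; cbn [map Wl Sl]; [lra|]. rewrite IHl, S_INR. simpl. lra. Qed.

Lemma filter_map_S (f : nat -> bool) l :
  filter f (map S l) = map S (filter (fun k => f (S k)) l).
Proof. induction l; simpl; auto. destruct (f (S a)); simpl; now rewrite IHl. Qed.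

Lemma bin_exps_rec n : (2 <= n)%nat ->
  bin_exps n = (if Nat.odd n then [0%nat] else []) ++ map S (bin_exps (Nat.div2 n)).
Proof.
  intros Hn. unfold bin_exps.
  assert (Hl : Nat.log2 n = S (Nat.log2 (Nat.div2 n))).
  { pose proof (Nat.div2_odd n) as E.
    assert (0 < Nat.div2 n)%nat.
    { destruct (Nat.odd n); simpl in E; lia. }
    rewrite E at 1. destruct (Nat.odd n); simpl Nat.b2n.
    - now apply Nat.log2_succ_double.
    - rewrite Nat.add_0_r. now apply Nat.log2_double. }
  rewrite Hl. change (seq 0 (S (S (Nat.log2 (Nat.div2 n)))))
    with (0%nat :: seq 1 (S (Nat.log2 (Nat.div2 n)))).
  rewrite <- seq_shift. cbn [filter]. change (Nat.testbit n 0) with (Nat.odd n). rewrite filter_map_S.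
  assert (E2 : filter (fun k => Nat.testbit n (S k)) (seq 0 (S (Nat.log2 (Nat.div2 n))))
    = filter (fun k => Nat.testbit (Nat.div2 n) k) (seq 0 (S (Nat.log2 (Nat.div2 n))))).
  { apply filter_ext. intros; now rewrite Nat.testbit_div2. }
  rewrite E2. destruct (Nat.odd n); reflexivity.
Qed.

Lemma key n : (1 <= n)%nat ->
  Sl (bin_exps n) = INR n /\
  (INR (Nat.log2 n) - 1) * INR n - Wl (bin_exps n) <= - INR (Nat.log2 n) - 1.
Proof.
  induction n as [n IH] using (well_founded_induction lt_wf). intros Hn.
  destruct (Nat.eq_dec n 1) as [->|Hn1].
  { vm_compute bin_exps. simpl. split; lra. }
  assert (H2 : (2 <= n)%nat) by lia.
  pose proof (Nat.div2_odd n) as E.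
  assert (Hm : (1 <= Nat.div2 n)%nat) by (destruct (Nat.odd n); simpl in E; lia).
  assert (Hlt : (Nat.div2 n < n)%nat) by (apply Nat.lt_div2; lia).
  destruct (IH _ Hlt Hm) as [HS HW].
  assert (Hl : Nat.log2 n = S (Nat.log2 (Nat.div2 n))).
  { rewrite E at 1. destruct (Nat.odd n); simpl Nat.b2n.
    - apply Nat.log2_succ_double; lia.
    - rewrite Nat.add_0_r. apply Nat.log2_double; lia. }
  rewrite bin_exps_rec by exact H2. rewrite Hl, S_INR.
  pose proof (pos_INR (Nat.log2 (Nat.div2 n))).
  set (m := Nat.div2 n) in *. set (M := Nat.log2 m) in *.
  assert (En : INR n = INR (Nat.b2n (Nat.odd n)) + 2 * INR m).
  { rewrite E at 1. rewrite plus_INR, mult_INR. simpl (INR 2). lra. }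
  rewrite En.
  destruct (Nat.odd n); simpl; rewrite ?Sl_map, ?Wl_map, HS; simpl; split; nra.
Qed.

Lemma entropy_bound n (c : R) l : 0 < INR n -> log2R (INR n) <= c ->
  entropy_bits (map (binProb n) l) <= (c * Sl l - Wl l) / INR n.
Proof.
  intros Hn Hc. induction l as [|k l IH]; simpl.
  - unfold Rdiv. lra.
  - assert (Hp : 0 < 2 ^ k) by (apply pow_lt; lra).
    assert (Hln2 : 0 < ln 2) by (pose proof ln_lt_2; lra).
    assert (Hterm : - (binProb n k * log2R (binProb n k)) <= (c * 2 ^ k - 2 ^ k * INR k) / INR n).
    { unfold binProb, log2R. replace (ln (2 ^ k / INR n)) with (ln (2 ^ k * / INR n)) by reflexivity.
      rewrite ln_mult, ln_Rinv, ln_pow by (try apply Rinv_0_lt_compat; lra).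
      unfold log2R in Hc.
      assert (ln (INR n) <= c * ln 2).
      { apply (Rmult_le_compat_r (ln 2)) in Hc; [|lra].
        unfold Rdiv in Hc. rewrite Rmult_assoc, Rinv_l in Hc; lra. }
      assert (- (2 ^ k / INR n * ((INR k * ln 2 + - ln (INR n)) / ln 2))
        = 2 ^ k / INR n * ((ln (INR n) / ln 2) - INR k)) by (field; lra).
      rewrite H0.
      assert (ln (INR n) / ln 2 <= c).
      { apply (Rmult_le_reg_r (ln 2)); [lra|]. unfold Rdiv. rewrite Rmult_assoc, Rinv_l; lra. }
      assert ((c * 2 ^ k - 2 ^ k * INR k) / INR n = 2 ^ k / INR n * (c - INR k)) by (field; lra).
      rewrite H2. apply Rmult_le_compat_l; [|lra].
      unfold Rdiv. apply Rmult_le_pos; [lra|]. left; now apply Rinv_0_lt_compat. }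
    assert ((c * (2 ^ k + Sl l) - (2 ^ k * INR k + Wl l)) / INR n =
      (c * 2 ^ k - 2 ^ k * INR k) / INR n + (c * Sl l - Wl l) / INR n) by (field; lra).
    rewrite H. lra.
Qed.

Theorem mainTheorem3 (n : nat) (hn : (1 <= n)%nat) :
  entropy_bits (map (binProb n) (bin_exps n)) <= 2.
Proof.
  assert (Hn : 0 < INR n) by (apply lt_0_INR; lia).
  set (M := INR (Nat.log2 n)).
  assert (Hln2 : 0 < ln 2) by (pose proof ln_lt_2; lra).
  assert (Hc : log2R (INR n) <= M + 1).
  { unfold log2R. apply (Rmult_le_reg_r (ln 2)); [lra|].
    unfold Rdiv. rewrite Rmult_assoc, Rinv_l by lra. rewrite Rmult_1_r.
    destruct (Nat.log2_spec n) as [_ H]; [lia|].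
    apply lt_INR in H. rewrite pow_INR in H. replace (INR 2) with 2 in H by (simpl; lra).
    assert (ln (INR n) < ln (2 ^ S (Nat.log2 n))) by (apply ln_increasing; lra).
    rewrite ln_pow in H0 by lra. rewrite S_INR in H0. unfold M. lra. }
  eapply Rle_trans; [apply (entropy_bound n (M + 1)); assumption|].
  destruct (key n hn) as [HS HW]. fold M in HW. rewrite HS.
  apply (Rmult_le_reg_r (INR n)); [lra|].
  unfold Rdiv. rewrite Rmult_assoc, Rinv_l by lra.
  pose proof (pos_INR (Nat.log2 n)). fold M in H. nra.
Qed.
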